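(* Let $C$ be a finite set of candidates, $a\in C$, and $P=(\succ_1,\dots,\succ_n)$ a profile of linear orders over $C$. Let $B$ be the $0/1$ matrix with rows indexed by $b\in C\setminus\{a\}$ and columns indexed by voters $i\in\{1,\dots,n\}$, with $B_{b,i}=1$ iff $b\succ_i a$. (This is the constraint matrix of the program (Young-IP): minimise $\sum_i d_i$ subject to $\sum_{i:\,b\succ_i a}d_i\ge\mathrm{maj}(b,a)+1$ for all $b\ne a$, $d_i\in\{0,1\}$, ignoring the bounds on $d_i$; here $\mathrm{maj}(b,a)=|\{i:b\succ_ia\}|-|\{i:a\succ_ib\}|$.) If $P$ is single-crossing, then $B$ is totally unimodular.
   Context: A profile of linear orders is single-crossing if the voters can be ordered so that for every pair $a,b\in C$, the set of voters $i$ with $a\succ_i b$ forms an interval of this voter ordering. A matrix is totally unimodular if every square submatrix has determinant in $\{-1,0,1\}$. *)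

(* Defs.v *)
From mathcomp Require Import all_boot all_order all_algebra all_fingroup.
Set Implicit Arguments. Unset Strict Implicit. Unset Printing Implicit Defensive.
Import GRing.Theory Num.Theory.
Local Open Scope ring_scope.

Definition strict_linear_order (C : finType) (r : rel C) : Prop :=
  [/\ irreflexive r, transitive r & forall x y, x != y -> r x y || r y x].

(* A profile of n voters: voter i prefers x to y iff P i x y. *)
Definition is_profile (C : finType) (n : nat) (P : 'I_n -> rel C) : Prop :=
  forall i, strict_linear_order (P i).

Definition single_crossing (C : finType) (n : nat) (P : 'I_n -> rel C) : Prop :=
  exists sigma : 'S_n, forall (x y : C) (k1 k2 k3 : 'I_n),
    (k1 <= k2 <= k3)%N -> P (sigma k1) x y -> P (sigma k3) x y ->
    P (sigma k2) x y.

Definition totally_unimodular (R Cl : finType) (M : R -> Cl -> int) : Prop :=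
  forall (k : nat) (f : 'I_k -> R) (g : 'I_k -> Cl),
    injective f -> injective g ->
    \det (\matrix_(i < k, j < k) M (f i) (g j)) \in [:: -1; 0; 1].

Definition young_matrix (C : finType) (a : C) (n : nat) (P : 'I_n -> rel C)
  : {b : C | b != a} -> 'I_n -> int :=
  fun b i => if P i (val b) a then 1 else 0.

(* Main.v *)
Require Import Defs.
From mathcomp Require Import all_boot all_order all_algebra all_fingroup.
From mathcomp Require Import zify.
Set Implicit Arguments. Unset Strict Implicit. Unset Printing Implicit Defensive.
Import GRing.Theory Num.Theory.
Local Open Scope ring_scope.

Definition zo k (A : 'M[int]_k) := forall i j, A i j = 0 \/ A i j = 1.
Definition cvx k (pos : 'I_k -> nat) (A : 'M[int]_k) :=
  forall i j1 j2 j3, (pos j1 <= pos j2 <= pos j3)%N ->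
    A i j1 = 1 -> A i j3 = 1 -> A i j2 = 1.

Lemma pm1 (m : nat) (x : int) : x \in [:: -1; 0; 1] -> (-1) ^+ m * x \in [:: -1; 0; 1].
Proof.
rewrite -signr_odd; case: (odd m); rewrite ?expr0 ?expr1 ?mul1r //.
by rewrite !inE => /or3P [] /eqP ->; rewrite ?mulN1r ?opprK ?oppr0 eqxx ?orbT.
Qed.

Lemma diff1 (x y : int) : (x = 0 \/ x = 1) -> (y = 0 \/ y = 1) ->
  (x - y = 1 <-> x = 1 /\ y = 0).
Proof. by move=> hx hy; case: hx => ->; case: hy => ->; split; lia. Qed.

Lemma key k : forall pos (A : 'M[int]_k), zo A -> cvx pos A ->
  \det A \in [:: -1; 0; 1].
Proof.
elim: k => [|k IH] pos A zA cA; first by rewrite det_mx00.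
pose j0 := [arg min_(j < ord0) pos j].
have j0min : forall j, (pos j0 <= pos j)%N.
  by move=> j; rewrite /j0; case: arg_minnP => // i _ h; apply: h.
have one : forall A : 'M[int]_k.+1, zo A -> cvx pos A ->
    (forall i i', A i j0 = 1 -> A i' j0 = 1 -> i = i') -> \det A \in [:: -1; 0; 1].
  move=> B zB cB uB; rewrite (expand_det_col B j0).
  case: (pickP (fun i => B i j0 == 1)) => [i0 /eqP Hi0 | none].
  - rewrite (bigD1 i0) //= big1 ?addr0; last first.
      move=> i ne; have [->|h] := zB i j0; first by rewrite mul0r.
      by rewrite (uB _ _ h Hi0) eqxx in ne.
    rewrite Hi0 mul1r /cofactor; apply: pm1.
    apply: (IH (fun j => pos (lift j0 j))).
    + by move=> i j; rewrite !mxE; apply: zB.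
    + by move=> i j1 j2 j3 h; rewrite !mxE; apply: cB h.
  - rewrite big1 // => i _; have [->|h] := zB i j0; first by rewrite mul0r.
    by move: (none i); rewrite h eqxx.
suff H : forall c (A : 'M[int]_k.+1), zo A -> cvx pos A ->
    (\sum_i (A i j0 == 1) <= c)%N -> \det A \in [:: -1; 0; 1].
  exact: (H _ A zA cA (leqnn _)).
elim=> [|c IHc] {}A {}zA {}cA hc.
  apply: one => // i i' Hi.
  by rewrite (bigD1 i) //= Hi eqxx in hc.
case: (boolP [exists i, exists i', (i != i') && (A i j0 == 1) && (A i' j0 == 1)]).
- case/existsP => i1 /existsP [i2 /andP[/andP[ne /eqP H1] /eqP H2]].
  have nest : forall i i', A i j0 = 1 -> A i' j0 = 1 ->
      (forall j, A i j = 1 -> A i' j = 1) \/ (forall j, A i' j = 1 -> A i j = 1).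
    move=> i i' Hi Hi'.
    case: (boolP [forall j, (A i j == 1) ==> (A i' j == 1)]) => [/forallP h|].
      by left => j /eqP Aij; move/implyP: (h j) => /(_ Aij) /eqP.
    rewrite negb_forall => /existsP [j]; rewrite negb_imply => /andP[/eqP Aij nA'ij].
    right => j' Hj'; apply/eqP; apply/negPn/negP => nAij'.
    case: (leqP (pos j) (pos j')) => hp.
      by move: nA'ij; rewrite (cA i' j0 j j') ?eqxx // j0min hp.
    by move: nAij'; rewrite (cA i j0 j' j) ?eqxx // j0min ltnW.
  have [b [s [nbs [Hb [Hs sub]]]]] : exists b s, b != s /\ A b j0 = 1 /\ A s j0 = 1 /\
      (forall j, A s j = 1 -> A b j = 1).
    case: (nest i1 i2 H1 H2) => h.
      by exists i2, i1; rewrite eq_sym ne.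
    by exists i1, i2.
  have nsb : (s == b) = false by apply/negbTE; rewrite eq_sym.
  pose A' := \matrix_(r, j) if r == b then A b j - A s j else A r j.
  pose B := \matrix_(r, j) if r == b then A s j else A r j.
  have nl : forall r, (lift b r == b) = false.
    by move=> r; apply/negbTE; rewrite eq_sym neq_lift.
  have detE : \det A = 1 * \det A' + 1 * \det B.
    apply: (@determinant_multilinear _ _ A A' B b 1 1).
    - by apply/rowP => j; rewrite !mxE eqxx !mul1r subrK.
    - by apply/matrixP => r j; rewrite !mxE nl.
    - by apply/matrixP => r j; rewrite !mxE nl.
  have detB : \det B = 0.
    by apply: (determinant_alternate nbs) => j; rewrite !mxE eqxx nsb.
  rewrite detE detB mulr0 addr0 mul1r; apply: IHc.
  + move=> r j; rewrite mxE; case: ifP => _; last exact: zA.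
    have [e|e] := zA b j; have [e'|e'] := zA s j; rewrite e e'; try lia.
    by have := sub j e'; rewrite e; lia.
  + move=> r j1 j2 j3 hp; rewrite !mxE; case: ifP => _; last exact: cA.
    move=> /diff1 [] // h1 h1' /diff1 [] // h3 h3'; apply/diff1 => //.
    split; first exact: (cA b j1 j2 j3 hp).
    have [//|e] := zA s j2; case/andP: hp => hp12 _.
    by rewrite (cA s j0 j1 j2 _ Hs e) ?j0min ?hp12 in h1'.
  + rewrite (bigD1 b) //= in hc; rewrite (bigD1 b) //=.
    rewrite mxE eqxx Hb Hs subrr /= add0n.
    rewrite Hb eqxx add1n ltnS in hc.
    apply: leq_trans hc; rewrite leq_eqVlt; apply/orP; left; apply/eqP.
    by apply: eq_bigr => i /negbTE hi; rewrite mxE hi.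
- rewrite negb_exists => /forallP nex.
  apply: one => // i i' Hi Hi'; apply/eqP; apply/negPn/negP => ne.
  move: (nex i); rewrite negb_exists => /forallP /(_ i').
  by rewrite ne Hi Hi' eqxx.
Qed.

Theorem mainTheorem8 (C : finType) (a : C) (n : nat) (P : 'I_n -> rel C) :
  is_profile P -> single_crossing P -> totally_unimodular (@young_matrix C a n P).
Proof.
move=> _ [sigma Hs] k f g _ _.
eapply (@key k (fun j => nat_of_ord ((sigma^-1)%g (g j)))).
- by move=> i j; rewrite mxE /young_matrix; case: ifP; [right|left].
- move=> i j1 j2 j3 hp; rewrite !mxE /young_matrix.
  have E : forall j, sigma ((sigma^-1)%g (g j)) = g j by move=> j; rewrite permKV.
  case: ifP => h1 //; case: ifP => h3 //; case: ifP => h2 //; last first.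
  have := Hs (val (f i)) a _ _ _ hp; rewrite !E h1 h3 h2.
  by move=> /(_ isT isT).
Qed.
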